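(* Let $\Sigma$ be a finite totally ordered alphabet, $\$$ a symbol smaller than all letters of $\Sigma$, and let $W \in \Sigma^+$ be given together with its Lyndon factorization $W = L_1 L_2 \cdots L_k$. There is an algorithm (called Bwt_Lynd) that proceeds in $k$ iterations, where iteration $i$ ($1 \le i \le k$) computes $bwt(L_1 \cdots L_i\$)$ from $bwt(L_1\cdots L_{i-1}\$)$ (by computing $bwt(L_i\$)$ and the suffix array of $L_i\$$, computing for each suffix of $L_i\$$ the number of suffixes of $L_1\cdots L_{i-1}\$$ lexicographically smaller than it using $C$ and $rank$ queries on $bwt(L_1\cdots L_{i-1}\$)$ supported in constant time, and merging), such that at the end of iteration $k$ it has correctly computed $bwt(L_1\cdots L_k\$) = bwt(W\$)$, each iteration $i$ runs in $O(\sum_{j=1}^{i} |L_j|)$ time, and the overall running time is $O(k^2 M)$, where $M = \max_{1\le i\le k} |L_i|$.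
   Context: A Lyndon word is a nonempty primitive word strictly smaller (lexicographically) than all its other cyclic shifts; the Lyndon factorization of $W$ is the unique factorization $W = L_1\cdots L_k$ into Lyndon words with $L_1 \ge \cdots \ge L_k$. For $Y \in \Sigma^*$, $bwt(Y\$)$ is obtained by sorting all suffixes of $Y\$$ lexicographically and listing, for each suffix in this order, the symbol cyclically preceding it in $Y\$$; the suffix array of $Y\$$ lists the starting positions of its suffixes in lexicographic order. For a word $u$ and symbol $x$, $C(u,x)$ is the number of symbols of $u$ smaller than $x$, and $rank(u,x,t)$ is the number of occurrences of $x$ in $u[1,t]$. *)

(* Defs.v *)
(* Words are sequences of natural numbers.
   Convention: the end-marker $ is the symbol 0; the alphabet Sigma is
   {1, ..., sigma} with the usual order of nat, so $ < every letter. *)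
From mathcomp Require Import all_boot.
Set Implicit Arguments.
Unset Strict Implicit.
Unset Printing Implicit Defensive.

Definition word := seq nat.
Definition dollar : nat := 0.

Fixpoint lexlt (u v : word) : bool :=
  match u, v with
  | _, [::] => false
  | [::], _ :: _ => true
  | a :: u', b :: v' => (a < b) || ((a == b) && lexlt u' v')
  end.
Definition lexle (u v : word) : bool := ~~ lexlt v u.

Definition primitive (w : word) : Prop :=
  forall (u : word) (e : nat), w = flatten (nseq e u) -> e <= 1.

Definition lyndon (w : word) : Prop :=
  w <> [::] /\ primitive w /\ forall i, 0 < i < size w -> lexlt w (rot i w).

Definition lyndon_factorization (W : word) (Ls : seq word) : Prop :=
  flatten Ls = W /\ (forall L, L \in Ls -> lyndon L) /\
  sorted (fun u v => lexle v u) Ls.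

Definition suffix_array (X : word) : seq nat :=
  sort (fun i j => lexle (drop i X) (drop j X)) (iota 0 (size X)).

(* for each suffix in sorted order, the symbol cyclically preceding it *)
Definition bwt (X : word) : word :=
  [seq nth dollar X ((i + size X).-1 %% size X) | i <- suffix_array X].

Definition Ccount (u : word) (x : nat) : nat := count (fun y => y < x) u.
Definition rank (u : word) (x t : nat) : nat := count (pred1 x) (take t u).

(* A computation returns its result together with the number of elementary
   steps it performed. *)
Definition Cost (A : Type) := (A * nat)%type.
Definition ret {A} (a : A) : Cost A := (a, 0).
Definition bind {A B} (m : Cost A) (f : A -> Cost B) : Cost B :=
  let (a, n) := m in let (b, n') := f a in (b, n + n').

Definition get (s : seq nat) (i : nat) : Cost nat := (nth 0 s i, 1).
Definition copy (s : seq nat) : Cost (seq nat) := (s, size s).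
(* linear-time suffix sorting (black box, as in the paper): |X| steps *)
Definition prim_sa (X : word) : Cost (seq nat) := (suffix_array X, size X).
(* building the C / rank structure on B: |B| steps *)
Definition prim_rank_build (B : word) : Cost unit := (tt, size B).
Definition qC (B : word) (a : nat) : Cost nat := (Ccount B a, 1).
Definition qrank (B : word) (a t : nat) : Cost nat := (rank B a t, 1).

Fixpoint mapM {A} (f : A -> Cost nat) (s : seq A) : Cost (seq nat) :=
  match s with
  | [::] => ret [::]
  | x :: s' => bind (f x) (fun y => bind (mapM f s') (fun ys => ret (y :: ys)))
  end.

Fixpoint mapM2 {A} (f : A -> Cost (nat * nat)) (s : seq A)
  : Cost (seq (nat * nat)) :=
  match s with
  | [::] => ret [::]
  | x :: s' => bind (f x) (fun y => bind (mapM2 f s') (fun ys => ret (y :: ys)))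
  end.

(* counts B L = [:: c_0; ...; c_m] (m = |L|) where c_j is the number of
   suffixes of P$ smaller than L[j..]$, computed by C and rank queries on
   B = bwt(P$) (backward search), from j = m down to 0. *)
Fixpoint counts (B : word) (L : word) : Cost (seq nat) :=
  match L with
  | [::] => ret [:: 0]
  | a :: L' =>
      bind (counts B L') (fun cs =>
      bind (qC B a) (fun ca =>
      bind (qrank B a (head 0 cs)) (fun r =>
      ret ((ca + r) :: cs))))
  end.

(* merging: rows = [:: (d, x); ...] gives, for each suffix of L$ in sorted
   order, the number d of (non-"$") rows of B preceding it and its bwt
   symbol x. *)
Fixpoint merge_rows (bt : word) (pos : nat) (rows : seq (nat * nat))
  : Cost word :=
  match rows with
  | [::] => copy bt
  | (d, x) :: rows' =>
      bind (copy (take (d - pos) bt)) (fun pre =>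
      bind (merge_rows (drop (d - pos) bt) d rows') (fun rest =>
      (pre ++ x :: rest, 1)))
  end.

(* Iteration: from B = bwt(P$) and the next Lyndon factor L, compute
   bwt(P L $). *)
Definition bwt_lynd_iter (B L : word) : Cost word :=
  let X := L ++ [:: dollar] in
  bind (prim_sa X) (fun saL =>
  bind (mapM (fun p => get X ((p + size X).-1 %% size X)) saL) (fun bwtL =>
  bind (prim_rank_build B) (fun _ =>
  bind (counts B L) (fun cs =>
  bind (get B 0) (fun b0 =>
  bind (mapM2 (fun px => bind (get cs px.1) (fun c =>
                          ret (c.-1, if px.1 == 0 then b0 else px.2)))
              (zip saL bwtL)) (fun rows =>
  merge_rows (behead B) 0 rows)))))).

(* Bwt_Lynd: starting from bwt($) = [:: $], run the k iterations; the
   trace lists, for each iteration i, its output and its running time. *)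
Fixpoint bwt_lynd_run (B : word) (Ls : seq word) : seq (word * nat) :=
  match Ls with
  | [::] => [::]
  | L :: Ls' => let r := bwt_lynd_iter B L in r :: bwt_lynd_run r.1 Ls'
  end.

Definition bwt_lynd (Ls : seq word) : seq (word * nat) :=
  bwt_lynd_run [:: dollar] Ls.

(* Main.v *)
Require Import Defs.
From mathcomp Require Import all_boot zify.
Set Implicit Arguments. Unset Strict Implicit. Unset Printing Implicit Defensive.

Lemma lexlt_irr u : lexlt u u = false.
Proof. by elim: u => //= a u ->; rewrite ltnn eqxx. Qed.

Lemma lexlt_trans u v w : lexlt u v -> lexlt v w -> lexlt u w.
Proof.
elim: u v w => [|a u IH] [|b v] [|c w] //=.
case/orP=> [ab|/andP[/eqP<- uv]]; case/orP=> [bc|/andP[/eqP<- vw]].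
- by rewrite (ltn_trans ab bc).
- by rewrite ab.
- by rewrite bc.
- by rewrite eqxx (IH _ _ uv vw) orbT.
Qed.

Lemma lexlt_asym u v : lexlt u v -> lexlt v u = false.
Proof. move=> h; apply/negP=> h'; by move: (lexlt_trans h h'); rewrite lexlt_irr. Qed.

Lemma lexlt_total u v : u != v -> lexlt u v || lexlt v u.
Proof.
elim: u v => [|a u IH] [|b v] //=.
case: (ltngtP a b) => //= ab; rewrite eqseq_cons ab eqxx /= => /IH.
by rewrite orbC.
Qed.

Lemma lexle_lt u v : lexle u v = (u == v) || lexlt u v.
Proof.
rewrite /lexle; case: (eqVneq u v) => [->|nuv] /=; first by rewrite lexlt_irr.
have := lexlt_total nuv; case h: (lexlt u v) => /=; first by rewrite lexlt_asym.
by move=> ->.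
Qed.

Lemma lexle_trans u v w : lexle u v -> lexle v w -> lexle u w.
Proof.
rewrite !lexle_lt => /orP[/eqP->//|uv] /orP[/eqP<-|vw]; first by rewrite uv orbT.
by rewrite (lexlt_trans uv vw) orbT.
Qed.

Lemma lexlt_le_trans u v w : lexlt u v -> lexle v w -> lexlt u w.
Proof. by move=> uv; rewrite lexle_lt => /orP[/eqP<-//|]; apply: lexlt_trans. Qed.

Lemma lexle_antisym u v : lexle u v -> lexle v u -> u = v.
Proof.
rewrite !lexle_lt => /orP[/eqP//|uv] /orP[/eqP//|vu].
by move: (lexlt_trans uv vu); rewrite lexlt_irr.
Qed.

Lemma lexle_lt_trans u v w : lexle u v -> lexlt v w -> lexlt u w.
Proof. by rewrite lexle_lt => /orP[/eqP->//|]; apply: lexlt_trans. Qed.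

Lemma lexlt_le u v : lexlt u v -> lexle u v.
Proof. by rewrite lexle_lt => ->; rewrite orbT. Qed.

Lemma lexle_total u v : lexle u v || lexle v u.
Proof. rewrite /lexle; case h: (lexlt v u) => //=; by rewrite lexlt_asym. Qed.

Lemma lexlt_catl w u v : lexlt (w ++ u) (w ++ v) = lexlt u v.
Proof. by elim: w => //= a w ->; rewrite ltnn eqxx. Qed.

Lemma lexlt_nil_r u : lexlt u [::] = false.
Proof. by case: u. Qed.

Lemma lexlt_dollar u : u != [::] -> lexlt u [:: 0] = false.
Proof. by case: u => //= a u _; rewrite lexlt_nil_r andbF. Qed.

Lemma lexlt_cat_mism a b x y : lexlt a b -> size b <= size a -> lexlt (a ++ x) (b ++ y).
Proof.
elim: a b => [|p a IH] [|q b] //=.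
rewrite ltnS => /orP[->//|/andP[-> h]] sb; by rewrite (IH _ h sb) orbT.
Qed.

Lemma lexlt_cat_eqsize x w a b : size x = size w ->
  lexlt (x ++ a) (w ++ b) = lexlt x w || ((x == w) && lexlt a b).
Proof.
elim: x w => [|p x IH] [|q w] //= [] /IH ->.
rewrite eqseq_cons; case: (p < q) => //=; case: (p == q) => //=.
Qed.

Lemma lexlt_cat_split a b y : lexlt a (b ++ y) -> size b < size a ->
  lexlt a b \/ exists w, a = b ++ w.
Proof.
elim: a b => [|p a IH] [|q b] //= .
- by move=> _ _; right; exists (p :: a).
- rewrite ltnS => /orP[->|/andP[/eqP<- h]] sb; first by left.
  case: (IH _ h sb) => [->|[w ->]]; first by left; rewrite eqxx orbT.
  by right; exists w.
Qed.

Definition zf (w : word) := all (fun a => 0 < a) w.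

Lemma cmp_transfer s v z1 z2 :
  zf s -> zf v ->
  (forall w, w != [::] -> v = s ++ w -> lexlt z1 (w ++ z2)) ->
  (forall w, w != [::] -> s = v ++ w -> ~~ lexlt (w ++ z1) z2) ->
  (s = v -> ~~ lexlt z1 z2) ->
  lexlt (s ++ z1) (v ++ z2) = lexlt (s ++ [::0]) (v ++ [::0]).
Proof.
elim: s v => [|a s IH] [|b v] //=.
- by move=> _ _ _ _ /(_ erefl) /negbTE ->.
- move=> _ /andP[b0 _] /(_ (b :: v) isT erefl) -> _ _; by rewrite b0.
- move=> /andP[a0 _] _ _ /(_ (a :: s) isT erefl) /negbTE /= -> _.
  by rewrite lexlt_nil_r andbF.
- move=> /andP[a0 zs] /andP[b0 zv] c1 c2 c3.
  case: (eqVneq a b) => [eab|nab]; last by rewrite !andFb.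
  subst b; rewrite /=; congr (_ || _).
  apply: IH => //.
  + by move=> w wn ev; apply: c1 => //; rewrite ev.
  + by move=> w wn ev; apply: c2 => //; rewrite ev.
  + by move=> ev; apply: c3; rewrite ev.
Qed.

Lemma lexlt_J L u rest : zf L -> zf u -> lexle L u ->
  (forall w, w != [::] -> L <> u ++ w) -> (exists b r, rest = b :: r /\ 0 < b) ->
  lexlt (L ++ [:: 0]) (u ++ rest).
Proof.
move=> + + + + [b [r [-> b0]]].
elim: L u => [|a L IH] [|c u] /=.
- by rewrite b0.
- by move=> _ /andP[-> _].
- by move=> _ _ _ /(_ (a :: L) isT).
- move=> /andP[a0 zL] /andP[c0 zu]; rewrite /lexle /= negb_or negb_and.
  case/andP=> ca h np.
  case: (ltngtP a c) => [//|ca2|eac]; first by rewrite ca2 in ca.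
  subst c; rewrite /=.
  apply: IH => //.
  + by move: h; rewrite eqxx /=.
  + by move=> w wn e; apply: (np w wn); rewrite e.
Qed.

Lemma lyndon_suffix_lt L t : lyndon L -> 0 < t < size L -> lexlt L (drop t L).
Proof.
case=> _ [_ Hrot] /andP[t0 tL].
have := Hrot t; rewrite t0 tL /= => /(_ isT).
rewrite /rot => h.
have sz : size (drop t L) < size L by rewrite size_drop ltn_subrL t0 (leq_trans t0 (ltnW tL)).
case: (lexlt_cat_split h sz) => // [[w ew]].
exfalso.
set u := drop t L in ew h sz.
set x := take t L in h.
have Lxu : L = x ++ u by rewrite cat_take_drop.
have sx : size x = t by rewrite size_take tL.
have sw : size w = t.
  have : size L = size u + size w by rewrite {1}ew size_cat.
  rewrite /u size_drop; lia.
have h1 : lexlt w x.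
  by move: h; rewrite {1}ew lexlt_catl.
have su : 0 < size u < size L by rewrite sz /u size_drop subn_gt0 tL.
have := Hrot (size u) su.
rewrite /rot {2 3}ew drop_size_cat // take_size_cat // {1}Lxu.
rewrite lexlt_cat_eqsize ?sx ?sw // => /orP[|/andP[/eqP exw _]].
- by rewrite (lexlt_asym h1).
- by move: h1; rewrite exw lexlt_irr.
Qed.

Lemma lyndon_suffix_ltD L t : lyndon L -> 0 < t < size L ->
  lexlt (L ++ [:: 0]) (drop t L ++ [:: 0]).
Proof.
move=> lL /andP[t0 tL]; apply: lexlt_cat_mism; first by apply: lyndon_suffix_lt => //; rewrite t0.
by rewrite size_drop leq_subr.
Qed.

Lemma zf_cat x y : zf (x ++ y) = zf x && zf y.
Proof. by rewrite /zf all_cat. Qed.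

Lemma zf_head x y : zf x -> x != [::] -> exists b r, x ++ y = b :: r /\ 0 < b.
Proof. case: x => //= b x /andP[b0 _] _; by exists b, (x ++ y). Qed.

Lemma zf_drop t x : zf x -> zf (drop t x).
Proof. by move=> h; rewrite /zf -(cat_take_drop t x) all_cat in h; case/andP: h. Qed.

Lemma lexlt_prefix u w : w != [::] -> lexlt u (u ++ w).
Proof. by move=> wn; rewrite -{1}(cats0 u) lexlt_catl; case: w wn. Qed.

Lemma lemma_H (Lp : seq word) L t :
  lyndon L -> zf L ->
  (forall Lm, Lm \in Lp -> [/\ lyndon Lm, zf Lm & lexle L Lm]) ->
  t < size (flatten Lp) ->
  lexlt (L ++ [::0]) (drop t (flatten Lp) ++ L ++ [::0]).
Proof.
move=> lL zL; elim: Lp t => [|Lm Lp IH] t //= hLp.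
have [lLm zLm leLm] := hLp Lm (mem_head _ _).
have hLp' : forall Lm', Lm' \in Lp -> [/\ lyndon Lm', zf Lm' & lexle L Lm'].
  by move=> Lm' h; apply: hLp; rewrite in_cons h orbT.
have zP : zf (flatten Lp).
  elim: Lp hLp' {IH hLp} => //= L' Lp' IH' h'.
  rewrite zf_cat; have [_ -> _] := h' L' (mem_head _ _); rewrite IH' //.
  by move=> x hx; apply: h'; rewrite in_cons hx orbT.
rewrite size_cat drop_cat.
case: ifP => tLm ts.
- rewrite -catA; apply: lexlt_J => //.
  + exact: zf_drop.
  + case: (posnP t) => [->|t0]; first by rewrite drop0.
    apply: (lexle_trans leLm); apply: lexlt_le; apply: lyndon_suffix_lt => //.
    by rewrite t0 tLm.
  + move=> w wn eL; move: (lexlt_prefix (drop t Lm) wn); rewrite -eL => h.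
    have : lexle L (drop t Lm).
      case: (posnP t) => [->|t0]; first by rewrite drop0.
      apply: (lexle_trans leLm); apply: lexlt_le; apply: lyndon_suffix_lt => //.
      by rewrite t0 tLm.
    by rewrite /lexle h.
  + rewrite catA; apply: zf_head; first by rewrite zf_cat zP.
    by case: (L) lL => [[]|]; case: (flatten Lp).
- apply: IH => //; move: tLm ts; lia.
Qed.

Lemma suffix_split (P s w : word) q : drop q P = s ++ w -> w != [::] ->
  w = drop (size s + q) P /\ size s + q < size P.
Proof.
move=> e wn; split; first by rewrite -drop_drop e drop_size_cat.
have : size (drop q P) = size s + size w by rewrite e size_cat.
rewrite size_drop; case: w wn {e} => //= a w _; lia.
Qed.

Lemma fact1 (Lp : seq word) L q q' :
  lyndon L -> zf L ->
  (forall Lm, Lm \in Lp -> [/\ lyndon Lm, zf Lm & lexle L Lm]) ->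
  zf (flatten Lp) ->
  q < size (flatten Lp) -> q' < size (flatten Lp) ->
  lexlt (drop q (flatten Lp) ++ L ++ [::0]) (drop q' (flatten Lp) ++ L ++ [::0]) =
  lexlt (drop q (flatten Lp) ++ [::0]) (drop q' (flatten Lp) ++ [::0]).
Proof.
move=> lL zL hLp zP qP q'P; apply: cmp_transfer; try exact: zf_drop.
- move=> w wn e; have [-> h] := suffix_split e wn; exact: lemma_H.
- move=> w wn e; have [ew h] := suffix_split e wn.
  by rewrite lexlt_asym // ew; apply: lemma_H.
- by move=> _; rewrite lexlt_irr.
Qed.

Lemma fact2 (P : word) L q p :
  lyndon L -> zf L -> zf P ->
  q < size P -> p <= size L ->
  lexlt (drop q P ++ L ++ [::0]) (drop p L ++ [::0]) =
  lexlt (drop q P ++ [::0]) (drop p L ++ [::0]).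
Proof.
move=> lL zL zP qP pL; apply: cmp_transfer; try exact: zf_drop.
- move=> w wn e; have [ew h] := suffix_split e wn.
  rewrite ew; apply: lyndon_suffix_ltD => //.
  by rewrite size_drop in h *; apply/andP; split; [move: qP; rewrite -subn_gt0; lia|lia].
- by move=> w wn e; rewrite lexlt_dollar //; case: w wn e.
- by move=> _; rewrite lexlt_dollar //; case: (L) lL => [[]|].
Qed.

Definition R (Z : word) := fun i j => lexle (drop i Z) (drop j Z).

Lemma R_trans Z : transitive (R Z).
Proof. move=> y x z; exact: lexle_trans. Qed.

Lemma R_total Z : total (R Z).
Proof. move=> x y; exact: lexle_total. Qed.

Lemma SA_sorted Z : sorted (R Z) (suffix_array Z).
Proof. exact: (sort_sorted (R_total Z)). Qed.

Lemma SA_perm Z : perm_eq (suffix_array Z) (iota 0 (size Z)).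
Proof. by rewrite /suffix_array perm_sort. Qed.

Lemma SA_unique Z s : sorted (R Z) s -> perm_eq s (iota 0 (size Z)) ->
  s = suffix_array Z.
Proof.
move=> ss ps; apply: (@sorted_eq_in _ (R Z)) => //.
- by move=> x y z _ _ _; apply: R_trans.
- move=> i j; rewrite !(perm_mem ps) !mem_iota /= !add0n => ib jb.
  move=> /andP[h1 h2]; have e := lexle_antisym h1 h2.
  have := congr1 size e; rewrite !size_drop; lia.
- exact: SA_sorted.
- by rewrite (permPl ps) perm_sym SA_perm.
Qed.

Definition pre (Z : word) i := nth dollar Z ((i + size Z).-1 %% size Z).

Lemma bwtE Z : bwt Z = map (pre Z) (suffix_array Z).
Proof. by []. Qed.

Definition cnt (Q : word) (v : word) :=
  count (fun i => lexlt (drop i Q) v) (iota 0 (size Q)).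

Lemma take_filter (T : eqType) (r : rel T) (p : pred T) s :
  pairwise r s -> (forall x y, r x y -> p y -> p x) ->
  take (count p s) s = filter p s.
Proof.
move=> + dc; elim: s => //= x s IH /andP[ax ps].
case px: (p x) => /=; first by rewrite IH.
have c0 : count p s = 0.
  apply/eqP; rewrite -leqn0 leqNgt -has_count; apply/hasPn => y ys; apply/negP => py.
  by move: (dc _ _ (allP ax y ys) py); rewrite px.
by rewrite c0 take0; symmetry; apply/eqP; rewrite -size_eq0 size_filter c0.
Qed.

Lemma size_Q (P : word) : size (P ++ [:: 0]) = (size P).+1.
Proof. by rewrite size_cat addn1. Qed.

Lemma pre_succ (P : word) j : j < size P -> pre (P ++ [:: 0]) j.+1 = nth 0 P j.
Proof.
move=> jP; rewrite /pre size_Q addSn /= modnDr modn_small; last by lia.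
by rewrite nth_cat jP.
Qed.

Lemma pre_zero (P : word) : pre (P ++ [:: 0]) 0 = 0.
Proof.
by rewrite /pre size_Q add0n /= modn_small // nth_cat ltnn subnn.
Qed.

Lemma pre_shift (P : word) (h : nat -> nat -> bool) :
  count (fun i => h i (pre (P ++ [:: 0]) i)) (iota 0 (size (P ++ [:: 0]))) =
  h 0 0 + count (fun j => h j.+1 (nth 0 P j)) (iota 0 (size P)).
Proof.
rewrite size_Q /= pre_zero; congr (_ + _).
have -> : iota 1 (size P) = map (addn 1) (iota 0 (size P)) by rewrite -iotaDl.
rewrite count_map; apply: eq_in_count => j.
rewrite mem_iota add0n /= => jP; by rewrite add1n pre_succ.
Qed.

Lemma count_Q (P : word) (f : nat -> nat -> bool) :
  count (fun j => f j (nth 0 (P ++ [:: 0]) j)) (iota 0 (size (P ++ [:: 0]))) =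
  count (fun j => f j (nth 0 P j)) (iota 0 (size P)) + f (size P) 0.
Proof.
rewrite size_Q -addn1 iotaD count_cat add0n /= addn0; congr (_ + _).
- apply: eq_in_count => j; rewrite mem_iota add0n /= => jP.
  by rewrite nth_cat jP.
- by rewrite nth_cat ltnn subnn.
Qed.

Lemma drop_nth (Q : word) j : j < size Q -> drop j Q = nth 0 Q j :: drop j.+1 Q.
Proof.
elim: Q j => [|a Q IH] [|j] //=; first by rewrite drop0.
by rewrite ltnS => /IH.
Qed.

Lemma count_or_disj (T : Type) (a b : pred T) s :
  (forall x, a x -> b x = false) ->
  count (fun x => a x || b x) s = count a s + count b s.
Proof.
move=> d; elim: s => //= x s ->; case ax: (a x) => /=; last lia.
rewrite (d _ ax) /=; lia.
Qed.

Lemma backward_step (P : word) a v : zf P -> 0 < a ->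
  let Q := P ++ [:: 0] in
  cnt Q (a :: v) = Ccount (bwt Q) a + rank (bwt Q) a (cnt Q v).
Proof.
move=> zP a0 Q.
have ps := SA_perm Q.
have pw : pairwise (R Q) (suffix_array Q) by rewrite -sorted_pairwise ?SA_sorted //; exact: R_trans.
have Hrank : rank (bwt Q) a (cnt Q v) =
  count (fun j => (nth 0 P j == a) && lexlt (drop j.+1 Q) v) (iota 0 (size P)).
  rewrite /rank bwtE -map_take.
  have -> : cnt Q v = count (fun i => lexlt (drop i Q) v) (suffix_array Q).
    by rewrite /cnt; apply/esym/permP.
  rewrite (take_filter pw); last first.
    by move=> x y hxy hy; apply: lexle_lt_trans hxy hy.
  rewrite count_map count_filter (permP ps).
  rewrite (pre_shift P (fun i c => (c == a) && lexlt (drop i Q) v)) /=.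
  by rewrite eq_sym (gtn_eqF a0).
have HC : Ccount (bwt Q) a = count (fun j => nth 0 P j < a) (iota 0 (size P)) + 1.
  rewrite /Ccount bwtE count_map (permP ps).
  by rewrite (pre_shift P (fun i c => c < a)) /= a0 addnC.
rewrite Hrank HC /cnt.
have -> : count (fun i => lexlt (drop i Q) (a :: v)) (iota 0 (size Q)) =
  count (fun j => (nth 0 Q j < a) || ((nth 0 Q j == a) && lexlt (drop j.+1 Q) v)) (iota 0 (size Q)).
  apply: eq_in_count => j; rewrite mem_iota add0n /= => jQ.
  by rewrite (drop_nth jQ).
rewrite (count_Q P (fun j c => (c < a) || ((c == a) && lexlt (drop j.+1 Q) v))) /=.
rewrite count_or_disj; last by move=> x /ltn_eqF ->.
rewrite a0 /=; lia.
Qed.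

Lemma bindE A B' (m : Cost A) (f : A -> Cost B') :
  bind m f = ((f m.1).1, m.2 + (f m.1).2).
Proof. by case: m => a n /=; case: (f a). Qed.

Lemma cnt_dollar (P : word) : cnt (P ++ [:: 0]) [:: 0] = 0.
Proof.
rewrite /cnt; apply/eqP; rewrite -leqn0 leqNgt -has_count; apply/hasPn => i.
rewrite mem_iota add0n /= => iQ; rewrite lexlt_dollar //.
by rewrite -size_eq0 size_drop subn_eq0 -ltnNge.
Qed.

Lemma counts_spec (P L : word) : zf P -> zf L ->
  counts (bwt (P ++ [:: 0])) L =
  ([seq cnt (P ++ [:: 0]) (drop j L ++ [:: 0]) | j <- iota 0 (size L).+1], 2 * size L).
Proof.
move=> zP; elim: L => [|a L IH]; first by rewrite /= cnt_dollar.
case/andP=> a0 zL.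
have -> : iota 0 (size (a :: L)).+1 = 0 :: map (addn 1) (iota 0 (size L).+1).
  by rewrite /= -iotaDl.
rewrite [counts _ _]/= bindE (IH zL) /= -map_comp /= drop0 -backward_step //.
congr (_, _); lia.
Qed.

Fixpoint mg (T : Type) (bt : seq T) (pos : nat) (rows : seq (nat * T)) : seq T :=
  match rows with
  | [::] => bt
  | (d, x) :: rows' => take (d - pos) bt ++ x :: mg (drop (d - pos) bt) d rows'
  end.

Lemma merge_rowsE bt pos rows :
  merge_rows bt pos rows = (mg bt pos rows, size bt + size rows).
Proof.
elim: rows bt pos => [|[d x] rows IH] bt pos /=; first by rewrite addn0.
rewrite /copy bindE IH /=; congr (_, _).
rewrite size_take size_drop; case: ltnP; lia.
Qed.

Lemma mg_map (T U : Type) (f : T -> U) bt pos rows :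
  map f (mg bt pos rows) = mg (map f bt) pos (map (fun r => (r.1, f r.2)) rows).
Proof.
elim: rows bt pos => [|[d x] rows IH] bt pos //=.
by rewrite map_cat /= IH map_take map_drop.
Qed.

Lemma mg_perm (T : eqType) (bt : seq T) pos rows :
  perm_eq (mg bt pos rows) (bt ++ map snd rows).
Proof.
elim: rows bt pos => [|[d x] rows IH] bt pos /=; first by rewrite cats0.
rewrite -[X in perm_eq _ (X ++ _)](cat_take_drop (d - pos) bt) -catA perm_cat2l.
apply: (@perm_trans _ (x :: (drop (d - pos) bt ++ map snd rows))); first by rewrite perm_cons IH.
by rewrite -cat1s perm_catCA.
Qed.

Lemma take_sub (T : eqType) (s : seq T) k m b : k <= m -> b \in take k s -> b \in take m s.
Proof.
move=> km bk; rewrite -(subnKC km) takeD mem_cat bk //.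
Qed.

Lemma mg_pairwise (T : eqType) (r : rel T) bt pos rows :
  pairwise r bt -> pairwise r (map snd rows) ->
  pairwise (fun u v => u.1 <= v.1) rows -> all (fun u => pos <= u.1) rows ->
  (forall u, u \in rows ->
     {in take (u.1 - pos) bt, forall b, r b u.2} /\
     {in drop (u.1 - pos) bt, forall b, r u.2 b}) ->
  pairwise r (mg bt pos rows).
Proof.
elim: rows bt pos => [|[d x] rows IH] bt pos //=.
move=> pbt /andP[ax psr] /andP[ad prows] /andP[pd prs] H.
have [Hx1 Hx2] := H _ (mem_head _ _); rewrite /= in Hx1 Hx2.
set k := d - pos.
have := pbt; rewrite -{1}(cat_take_drop k bt) pairwise_cat => /and3P[atd ptk pdk].
have prest : pairwise r (mg (drop k bt) d rows).
  apply: IH => //.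
  move=> u ur; have [H1 H2] := H u (ltac:(by rewrite in_cons ur orbT)).
  have du : d <= u.1 by apply: (allP ad u ur).
  split.
  - move=> b bin; apply: H1; have -> : u.1 - pos = k + (u.1 - d) by rewrite /k; lia.
    by rewrite takeD mem_cat bin orbT.
  - move=> b bin; apply: H2; move: bin; rewrite drop_drop /k.
    by have -> : u.1 - d + (d - pos) = u.1 - pos by lia.
rewrite pairwise_cat ptk /= prest andbT.
apply/andP; split.
- apply/allrelP => b y bk; rewrite in_cons => /orP[/eqP->|yr]; first exact: Hx1.
  move: yr; rewrite (perm_mem (mg_perm _ _ _)) mem_cat => /orP[yd|].
  + exact: (allrelP atd).
  + case/mapP => u ur ->; have [H1 _] := H u (ltac:(by rewrite in_cons ur orbT)).
    apply: H1; apply: take_sub bk; move: (allP ad u ur) => /=; rewrite /k; lia.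
- rewrite (perm_all _ (mg_perm _ _ _)) all_cat ax andbT.
  by apply/allP => b bd; apply: Hx2.
Qed.

Lemma pre_E (Z : word) i : i < size Z ->
  pre Z i = if i == 0 then nth 0 Z (size Z).-1 else nth 0 Z i.-1.
Proof.
move=> iZ; rewrite /pre; case: i iZ => [|i] iZ /=.
- by rewrite add0n modn_small //; lia.
- by rewrite modnDr modn_small //; lia.
Qed.

Lemma drop_filter (T : eqType) (r : rel T) (p : pred T) s :
  pairwise r s -> (forall x y, r x y -> p y -> p x) ->
  drop (count p s) s = filter (predC p) s.
Proof.
move=> + dc; elim: s => //= x s IH /andP[ax ps].
case px: (p x) => /=; first by rewrite IH.
have c0 : count p s = 0.
  apply/eqP; rewrite -leqn0 leqNgt -has_count; apply/hasPn => y ys; apply/negP => py.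
  by move: (dc _ _ (allP ax y ys) py); rewrite px.
rewrite c0 drop0; congr (_ :: _); symmetry; apply/all_filterP.
apply/allP => y ys /=; apply/negP => py.
by move: (dc _ _ (allP ax y ys) py); rewrite px.
Qed.

Lemma mapME (T : Type) (f : T -> Cost nat) s :
  (forall x, (f x).2 = 1) -> mapM f s = (map (fun x => (f x).1) s, size s).
Proof.
move=> h; elim: s => //= x s IH; rewrite bindE IH /= h; congr (_, _); lia.
Qed.

Lemma mapM2E (T : Type) (f : T -> Cost (nat * nat)) s :
  (forall x, (f x).2 = 1) -> mapM2 f s = (map (fun x => (f x).1) s, size s).
Proof.
move=> h; elim: s => //= x s IH; rewrite bindE IH /= h; congr (_, _); lia.
Qed.

Lemma zip_map (T U : Type) (g : T -> U) s : zip s (map g s) = map (fun p => (p, g p)) s.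
Proof. by elim: s => //= x s ->. Qed.

Lemma SA_Q (P : word) : zf P ->
  suffix_array (P ++ [:: 0]) = size P :: sort (R (P ++ [:: 0])) (iota 0 (size P)).
Proof.
move=> zP; symmetry; apply: SA_unique.
- rewrite sorted_pairwise; last exact: R_trans.
  rewrite pairwise_cons -sorted_pairwise ?sort_sorted ?andbT; last exact: R_trans.
  + apply/allP => i; rewrite mem_sort mem_iota add0n /= => iP.
    rewrite /R; have -> : drop (size P) (P ++ [:: 0]) = [:: 0] by rewrite drop_size_cat.
    rewrite /lexle lexlt_dollar //.
    by rewrite -size_eq0 size_drop size_Q; lia.
  + exact: R_total.
- by rewrite size_Q -addn1 iotaD add0n /= perm_sym perm_catC /= perm_cons perm_sym perm_sort.
Qed.

Lemma size_SA Z : size (suffix_array Z) = size Z.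
Proof. by rewrite (perm_size (SA_perm Z)) size_iota. Qed.

Lemma iter_unfold (B L : word) :
  let X := L ++ [:: dollar] in
  bwt_lynd_iter B L =
  (mg (behead B) 0 (map (fun p => ((nth 0 (counts B L).1 p).-1,
                                    if p == 0 then nth 0 B 0 else pre X p)) (suffix_array X)),
   size X + (size X + (size B + ((counts B L).2 + (1 + (size X + ((size B).-1 + size X))))))).
Proof.
move=> X; rewrite /bwt_lynd_iter -/X.
rewrite bindE; cbv beta; rewrite [(prim_sa X).1]/= [(prim_sa X).2]/=.
rewrite bindE; cbv beta; rewrite mapME //.
case: (counts B L) => cs c.
rewrite [(_, _).1]/= [(_, _).2]/= /bind /prim_rank_build.
rewrite mapM2E; last by [].
rewrite zip_map -map_comp merge_rowsE /= size_map size_SA size_behead.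
rewrite !size_map !size_SA; by [].
Qed.

Lemma drop_X (L : word) p : p <= size L -> drop p (L ++ [:: 0]) = drop p L ++ [:: 0].
Proof.
rewrite drop_cat leq_eqVlt => /orP[/eqP->|->//].
by rewrite ltnn subnn drop_size.
Qed.

Lemma take_pred (s : seq nat) x c b : b \in take c.-1 s -> b \in take c (x :: s).
Proof. by case: c => [|c] /=; [rewrite take0 | move=> h; rewrite in_cons h orbT]. Qed.

Lemma drop_pred (s : seq nat) x c b : b \in drop c.-1 s -> b \in drop c (x :: s).
Proof. by case: c => [|c] /=; [rewrite drop0 => h; rewrite in_cons h orbT | ]. Qed.

Lemma nth_last_zero (Y : word) : nth 0 (Y ++ [:: 0]) (size (Y ++ [:: 0])).-1 = 0.
Proof. by rewrite size_Q /= nth_cat ltnn subnn. Qed.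

Lemma iter_spec (Lp : seq word) L :
  lyndon L -> zf L -> zf (flatten Lp) ->
  (forall Lm, Lm \in Lp -> [/\ lyndon Lm, zf Lm & lexle L Lm]) ->
  bwt_lynd_iter (bwt (flatten Lp ++ [:: 0])) L =
  (bwt (flatten Lp ++ L ++ [:: 0]), 6 * size L + 2 * size (flatten Lp) + 6).
Proof.
move=> lL zL zP hLp.
rewrite iter_unfold /dollar.
rewrite (counts_spec zP zL) /=.
set P := flatten Lp in zP *.
set Q := P ++ [:: 0].
set X := L ++ [:: 0].
set n := size P.
have SAQ : suffix_array Q = n :: sort (R Q) (iota 0 n) := SA_Q zP.
set A := sort (R Q) (iota 0 n) in SAQ.
have Bq : bwt Q = pre Q n :: map (pre Q) A by rewrite bwtE SAQ.
have sX : size X = (size L).+1 by rewrite size_cat addn1.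
rewrite Bq /= size_map.
have sA : size A = n by rewrite size_sort size_iota.
congr (_, _); last by rewrite sX sA; lia.
set T := P ++ X.
have sT : size T = n + size X by rewrite size_cat.
have Apm : perm_eq A (iota 0 n) by rewrite perm_sort.
have Alt : forall b, b \in A -> b < n by move=> b; rewrite (perm_mem Apm) mem_iota.
have SAXle : forall p, p \in suffix_array X -> p <= size L.
  by move=> p; rewrite (perm_mem (SA_perm X)) mem_iota sX.
have dropTo : forall b, b < n -> drop b T = drop b P ++ X.
  by move=> b bn; rewrite /T drop_cat bn.
have dropTn : forall p, drop (n + p) T = drop p X.
  by move=> p; rewrite /T drop_cat ltnNge leq_addr /= addKn.
have dropQ : forall b, b < n -> drop b Q = drop b P ++ [:: 0].
  by move=> b bn; rewrite /Q drop_cat bn.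
have preTQ : forall b, b < n -> pre T b = pre Q b.
  move=> b bn; rewrite !pre_E; try (rewrite ?sT ?size_Q; lia).
  case: (b == 0).
  - by rewrite /T /X catA !nth_last_zero.
  - by rewrite /T /Q !nth_cat; have -> : b.-1 < size P by lia.
have preTn : forall p, p <= size L -> pre T (n + p) = if p == 0 then pre Q n else pre X p.
  move=> p pL; rewrite !pre_E; try (rewrite ?sT ?size_Q ?sX; lia).
  case: (posnP p) => [->|p0].
  - rewrite addn0; case: (eqVneq n 0) => [n0|n0].
    + by rewrite /T /X /Q catA !nth_last_zero.
    + by rewrite /T /Q !nth_cat; have -> : n.-1 < size P by lia.
  - have -> : (n + p == 0) = false by lia.
    rewrite /T nth_cat; have -> : (n + p).-1 < size P = false by lia.
    by have -> : (n + p).-1 - size P = p.-1 by lia.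
have pwQ : pairwise (R Q) (n :: A).
  by rewrite -SAQ -sorted_pairwise ?SA_sorted //; apply: R_trans.
have pwX : pairwise (R X) (suffix_array X).
  by rewrite -sorted_pairwise ?SA_sorted //; apply: R_trans.
pose d p := (cnt Q (drop p X)).-1.
pose rowsI := map (fun p => (d p, n + p)) (suffix_array X).
have e1 : map (pre Q) A = map (pre T) A.
  by apply/eq_in_map => b /Alt bn; rewrite preTQ.
rewrite e1.
rewrite (_ : map _ (suffix_array X) = map (fun r => (r.1, pre T r.2)) rowsI); last first.
  rewrite /rowsI -map_comp; apply/eq_in_map => p pin /=.
  have pL := SAXle p pin.
  have -> : nth 0 (cnt Q (drop 0 L ++ [:: 0])
       :: [seq cnt Q (drop j L ++ [:: 0]) | j <- iota 1 (size L)]) p =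
       cnt Q (drop p L ++ [:: 0]).
    case: p pL {pin} => [|p] pL //=.
    by rewrite (nth_map 0) ?size_iota // nth_iota.
  by rewrite /d drop_X // preTn.
rewrite -mg_map bwtE; congr (map _ _).
apply: SA_unique.
- rewrite sorted_pairwise; last exact: R_trans.
  apply: mg_pairwise.
  + have : pairwise (R Q) A by move: pwQ; rewrite pairwise_cons => /andP[].
    rewrite (@eq_in_pairwise _ (fun i => i < n) (R Q) (R T)) //.
    * move=> i j /= ilt jlt; rewrite /R /lexle dropTo // dropTo // dropQ // dropQ //.
      by rewrite /X fact1.
    * by apply/allP => b; exact: Alt.
  + rewrite /rowsI -map_comp pairwise_map; apply: sub_pairwise pwX => p q /=.
    by rewrite /R !dropTn.
  + rewrite /rowsI pairwise_map; apply: sub_pairwise pwX => p q h /=.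
    have : cnt Q (drop p X) <= cnt Q (drop q X).
      apply: sub_count => i /= hi; exact: lexlt_le_trans hi h.
    rewrite /d; lia.
  + by apply/allP.
  + move=> u /mapP [p pin ->] /=; rewrite subn0.
    have pL := SAXle p pin.
    set v := drop p X.
    have dc : forall x y, R Q x y -> lexlt (drop y Q) v -> lexlt (drop x Q) v.
      by move=> x y hxy hy; apply: lexle_lt_trans hxy hy.
    have cpE : count (fun i => lexlt (drop i Q) v) (n :: A) = cnt Q v.
      by rewrite -SAQ /cnt; apply/permP; exact: SA_perm.
    have tk := take_filter pwQ dc; have dp := drop_filter pwQ dc.
    rewrite cpE in tk dp.
    split.
    * move=> b bin; have bA : b \in A by apply: mem_take bin.
      have bn := Alt b bA.
      have : b \in take (cnt Q v) (n :: A) by apply: take_pred.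
      rewrite tk mem_filter => /andP[h _].
      rewrite /R dropTo // dropTn; apply: lexlt_le.
      move: h; rewrite dropQ // /v drop_X // -fact2 //.
    * move=> b bin; have bA : b \in A by apply: mem_drop bin.
      have bn := Alt b bA.
      have : b \in drop (cnt Q v) (n :: A) by apply: drop_pred.
      rewrite dp mem_filter => /andP[h _].
      rewrite /R dropTn (dropTo _ bn) /lexle.
      move: h; rewrite /= dropQ // /v drop_X // -fact2 //.
- apply: (perm_trans (mg_perm _ _ _)).
  rewrite /rowsI -map_comp sT iotaD add0n; apply: perm_cat => //.
  rewrite -[n]addn0 iotaDl addn0; apply: perm_map; exact: SA_perm.
Qed.

Lemma zf_flatten (Ls : seq word) : zf (flatten Ls) = all zf Ls.
Proof. by elim: Ls => //= L Ls IH; rewrite zf_cat IH. Qed.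

Lemma run_spec (Ls' Lp : seq word) :
  (forall L, L \in Lp ++ Ls' -> lyndon L /\ zf L) ->
  pairwise (fun u v => lexle v u) (Lp ++ Ls') ->
  let tr := bwt_lynd_run (bwt (flatten Lp ++ [:: 0])) Ls' in
  size tr = size Ls' /\
  forall i, i < size Ls' -> nth ([::], 0) tr i =
    (bwt (flatten (Lp ++ take i.+1 Ls') ++ [:: 0]),
     6 * size (nth [::] Ls' i) + 2 * size (flatten (Lp ++ take i Ls')) + 6).
Proof.
elim: Ls' Lp => [|L Ls IH] Lp hL hpw //=.
have [lL zL] : lyndon L /\ zf L by apply: hL; rewrite mem_cat mem_head orbT.
have zP : zf (flatten Lp).
  rewrite zf_flatten; apply/allP => x xin.
  by have [] := hL x (ltac:(by rewrite mem_cat xin)).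
have hLp : forall Lm, Lm \in Lp -> [/\ lyndon Lm, zf Lm & lexle L Lm].
  move=> Lm Lmin; have [l z] := hL Lm (ltac:(by rewrite mem_cat Lmin)).
  split=> //; move: hpw; rewrite pairwise_cat => /and3P[ar _ _].
  exact: (allrelP ar Lm L Lmin (mem_head _ _)).
rewrite (iter_spec lL zL zP hLp) /=.
have e : flatten Lp ++ L ++ [:: 0] = flatten (Lp ++ [:: L]) ++ [:: 0].
  by rewrite flatten_cat /= cats0 catA.
rewrite e.
have [IH1 IH2] := IH (Lp ++ [:: L]) (ltac:(by move=> x; rewrite -catA; apply: hL))
                    (ltac:(by rewrite -catA)).
split; first by rewrite IH1.
case=> [|i] /=.
- by rewrite take0 !cats0.
- by rewrite ltnS => iL; rewrite IH2 // -!catA /=.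
Qed.

Lemma sumn_le (s : seq nat) b : (forall i, i < size s -> nth 0 s i <= b) -> sumn s <= size s * b.
Proof.
elim: s => //= x s IH h.
have hx := h 0 isT.
have hs : sumn s <= size s * b by apply: IH => i iS; apply: (h i.+1).
rewrite mulSn; exact: leq_add.
Qed.

Lemma size_flatten_max (Ls : seq word) :
  size (flatten Ls) <= size Ls * \max_(L <- Ls) size L.
Proof.
elim: Ls => [|L Ls IH]; first by [].
rewrite /= big_cons size_cat mulSn; apply: leq_add; first exact: leq_maxl.
apply: (leq_trans IH); apply: leq_mul => //; exact: leq_maxr.
Qed.

Lemma bwt0 : bwt ([::] ++ [:: 0]) = [:: dollar].
Proof. by []. Qed.

Theorem proposition3 :
  forall sigma : nat, exists c : nat,
  forall (W : word) (Ls : seq word),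
    W <> [::] ->
    all (fun a => 0 < a <= sigma) W ->
    lyndon_factorization W Ls ->
    let k := size Ls in
    let M := \max_(L <- Ls) size L in
    let tr := bwt_lynd Ls in
    (* k iterations *)
    size tr = k /\
    (* iteration i (0-based here) computes bwt(L_1 ... L_(i+1) $) and runs in
       time O(|L_1| + ... + |L_(i+1)|) *)
    (forall i, i < k ->
       (nth ([::], 0) tr i).1 = bwt (flatten (take i.+1 Ls) ++ [:: dollar]) /\
       (nth ([::], 0) tr i).2 <= c * sumn (map size (take i.+1 Ls))) /\
    (* at the end, bwt(W$) has been computed *)
    (last ([:: dollar], 0) tr).1 = bwt (W ++ [:: dollar]) /\
    (* overall running time O(k^2 M) *)
    sumn (map snd tr) <= c * (k ^ 2 * M).
Proof.
move=> sigma; exists 12 => W Ls Wn Wa [eW [lLs sLs]] k M tr.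
have zW : zf W by apply/allP => a /(allP Wa) /andP[].
have hL : forall L, L \in [::] ++ Ls -> lyndon L /\ zf L.
  move=> L Lin; split; first exact: lLs.
  by move: zW; rewrite -eW zf_flatten => /allP; apply.
have pw : pairwise (fun u v => lexle v u) ([::] ++ Ls).
  rewrite -sorted_pairwise //; move=> y x z h1 h2; exact: lexle_trans h2 h1.
have [S1 S2] := run_spec hL pw.
rewrite /= bwt0 in S1 S2.
rewrite -/(bwt_lynd Ls) -/tr in S1 S2.
have Hi : forall i, i < k ->
   (nth ([::], 0) tr i).1 = bwt (flatten (take i.+1 Ls) ++ [:: dollar]) /\
   (nth ([::], 0) tr i).2 <= 12 * sumn (map size (take i.+1 Ls)).
  move=> i ik; rewrite S2 //=; split => //.
  rewrite -size_flatten (take_nth [::] ik) -cats1 flatten_cat size_cat /= cats0.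
  have : 0 < size (nth [::] Ls i).
    have [Ln _] := lLs (nth [::] Ls i) (mem_nth _ ik).
    by case: (nth [::] Ls i) Ln.
  move: (size (nth [::] Ls i)) (size (flatten (take i Ls))) => a b; lia.
have k0 : 0 < k by rewrite /k; case: (Ls) eW Wn => //= ->.
split => //; split => //; split.
- rewrite -nth_last S1 (set_nth_default ([::], 0)); last by rewrite S1 prednK.
  have [-> _] := Hi k.-1 ltac:(by rewrite prednK).
  by rewrite prednK // take_size eW.
- have Wb : size W <= k * M by rewrite -eW; exact: size_flatten_max.
  apply: (@leq_trans (size tr * (12 * size W))).
    rewrite -(size_map snd); apply: sumn_le => i; rewrite size_map => itr.
    rewrite (nth_map ([::], 0)) //; rewrite S1 in itr.
    have [_ h] := Hi i itr; apply: (leq_trans h); rewrite leq_mul2l /=.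
    rewrite -size_flatten -eW -{2}(cat_take_drop i.+1 Ls) flatten_cat size_cat.
    exact: leq_addr.
  rewrite S1 mulnCA leq_mul2l /= expnS expn1 -mulnA; exact: leq_mul.
Qed.
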